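(* Let $P(z) \in \mathbb{C}[z, z^{-1}]$ be a Laurent polynomial and let $A \subseteq [0,1]$ be a closed set such that $P(e^{2\pi i t}) \neq 0$ for all $t \in A$. Then \[ \lim_{k\to\infty} \frac{1}{k!} \int_A \log^k \left|P\left(e^{2\pi i t}\right)\right| \, dt = 0. \]
   Context: $\log^k x$ means $(\log x)^k$; the integral is with respect to Lebesgue measure. *)

(* Defs.v *)
From HB Require Import structures.
From mathcomp Require Import all_boot all_order all_algebra.
From mathcomp Require Import all_classical all_reals all_analysis.
From mathcomp Require Import complex.
Set Implicit Arguments. Unset Strict Implicit. Unset Printing Implicit Defensive.
Import Order.TTheory GRing.Theory Num.Theory numFieldNormedType.Exports.
Local Open Scope ring_scope.

(* A Laurent polynomial P in C[z, z^-1] is represented as z^{-m} * Q(z)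
   with m : nat and Q : {poly C}; every Laurent polynomial has this form. *)
Definition laurent_eval (R : rcfType) (m : nat) (Q : {poly R[i]}) (z : R[i]) : R[i] :=
  z ^- m * Q.[z].

Definition e2pi (R : realType) (t : R) : R[i] :=
  (cos (2 * pi * t) +i* sin (2 * pi * t))%C.

Definition cabs (R : rcfType) (w : R[i]) : R := Normc.normc w.

(* Main.v *)
Require Import Defs.
From HB Require Import structures.
From mathcomp Require Import all_boot all_order all_algebra.
From mathcomp Require Import all_classical all_reals all_analysis.
From mathcomp Require Import complex.
From mathcomp Require Import measurable_realfun.
Import Order.TTheory GRing.Theory Num.Theory numFieldNormedType.Exports numFieldTopology.Exports.
Local Open Scope classical_set_scope.
Local Open Scope ring_scope.
Section Aux.
Local Open Scope complex_scope.
Variable R : realType.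
Local Notation CC := (R[i] : numFieldType).

Lemma normR (a : R) : `|a%:C| = `|a|%:C :> R[i].
Proof. by rewrite normc_def /= expr0n /= addr0 sqrtr_sqr. Qed.

Lemma cabs_norm (z : R[i]) : `|z| = (cabs z)%:C.
Proof. by case: z. Qed.

Lemma contC (f : R -> R) t : {for t, continuous f} ->
  {for t, continuous (fun x => (f x)%:C : CC)}.
Proof.
move=> /cvgrPdist_lt cf; apply/cvgrPdist_lt => e e0.
move: (e0); rewrite ltcE /= => /andP[/eqP Ie Re0].
have := cf _ Re0; apply: filterS => x hx.
rewrite -rmorphB normR ltcE /= -Ie eqxx /=; exact: hx.
Qed.

Lemma cabs_cont : continuous (fun z : CC => cabs z).
Proof.
move=> z; apply/(@cvgrPdist_lt _ _ _ _ (nbhs_filter z)) => e e0.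
have := (@cvgrPdist_lt _ _ _ (nbhs z) (nbhs_filter z) id z).1 (@cvg_id _ (nbhs z)) (e%:C) ltac:(by rewrite ltcR).
apply: filterS => w hw.
have h := ler_dist_dist z w.
rewrite [`|z|]cabs_norm [`|w|]cabs_norm -rmorphB normR in h.
rewrite -ltcR; apply: le_lt_trans h hw.
Qed.

Lemma cabs_e2pi (t : R) : cabs (e2pi t) = 1.
Proof. by rewrite /cabs /e2pi /= cos2Dsin2 sqrtr1. Qed.

Lemma e2pi_neq0 (t : R) : e2pi t != 0.
Proof.
apply/negP => /eqP h; have := cabs_e2pi t; rewrite h /cabs Normc.normc0.
by move/eqP; rewrite eq_sym oner_eq0.
Qed.

Lemma lin_cont (g : R -> R) : continuous g -> continuous (fun x => g (2 * pi * x)).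
Proof.
move=> cg t; apply: continuous_comp; last exact: cg.
by apply: cvgM; [exact: cvg_cst | exact: cvg_id].
Qed.

Lemma e2pi_cont : continuous (fun t => e2pi t : CC).
Proof.
have -> : (fun t => e2pi t : CC) =
   (fun t => (cos (2*pi*t))%:C + 'i * (sin (2*pi*t))%:C) :> (R -> CC).
  by apply/funext => s; rewrite {1}[e2pi s]complexE.
move=> t; apply: cvgD; first exact/contC/lin_cont/continuous_cos.
apply: cvgM; first exact: cvg_cst.
exact/contC/lin_cont/continuous_sin.
Qed.

Lemma horner_cont (f : R -> CC) t (p : {poly R[i]}) : {for t, continuous f} ->
  {for t, continuous (fun x => p.[f x] : CC)}.
Proof.
move=> cf; elim/poly_ind: p => [|p c IH].
  have -> : (fun x => (0 : {poly R[i]}).[f x] : CC) = (fun=> 0).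
    by apply/funext => x; rewrite horner0.
  exact: cvg_cst.
have -> : (fun x => (p * 'X + c%:P).[f x] : CC) = (fun x => p.[f x] * f x + c).
  by apply/funext => x; rewrite hornerMXaddC.
by apply: cvgD; [apply: cvgM | exact: cvg_cst].
Qed.


Lemma P_cont m (Q : {poly R[i]}) : continuous (fun t => laurent_eval m Q (e2pi t) : CC).
Proof.
move=> t; rewrite /laurent_eval.
have -> : (fun t => (e2pi t)^-m * Q.[e2pi t] : CC) =
   (fun t => (('X^m : {poly R[i]}).[e2pi t])^-1 * Q.[e2pi t]).
  by apply/funext => s; rewrite hornerXn.
apply: cvgM; last exact: horner_cont (e2pi_cont t).
apply: cvgV; first by rewrite hornerXn expf_neq0 // e2pi_neq0.
exact: horner_cont (e2pi_cont t).
Qed.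

Lemma cabs_gt0 (z : R[i]) : z != 0 -> 0 < cabs z.
Proof.
move=> z0; rewrite lt_def; apply/andP; split.
  by apply: contra z0 => /eqP /Normc.eq0_normc ->.
by case: z {z0} => a b; exact: sqrtr_ge0.
Qed.

Lemma ln_bound (x c : R) : 0 < x -> x <= c -> x^-1 <= c -> `|ln x| <= ln c.
Proof.
move=> x0 xc ixc.
have c0 : 0 < c by apply: lt_le_trans xc.
case: (leP 1 x) => hx.
  by rewrite ger0_norm ?ln_ge0 // ler_ln ?posrE.
rewrite ler0_norm; last by rewrite ln_le0 // ltW.
rewrite -lnV ?posrE // ler_ln ?posrE ?invr_gt0 //.
Qed.

Lemma bnd_on (A : set R) (f : R -> R) : compact A -> {within A, continuous f} ->
  exists M, forall t, A t -> `|f t| <= M.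
Proof.
move=> cA cf; have [M [_ HM]] := compact_bounded (continuous_compact cf cA).
exists (`|M| + 1) => t At; apply: (HM (`|M|+1)); last by exists t.
by rewrite (le_lt_trans (ler_norm M)) // ltrDl.
Qed.

End Aux.

Theorem lemma1 (R : realType) (m : nat) (Q : {poly R[i]}) (A : set R) :
  closed A -> A `<=` `[0, 1]%classic ->
  (forall t, A t -> laurent_eval m Q (e2pi t) != 0) ->
  (fun k : nat => ((k`!%:R)^-1)%:E *
      \int[@lebesgue_measure R]_(t in A)
         ((ln (cabs (laurent_eval m Q (e2pi t)))) ^+ k)%:E)%E
    @ \oo --> 0%:E.
Proof.
move=> cA sA nz.
set g := fun t => cabs (laurent_eval m Q (e2pi t)).
have gc : continuous g.
  move=> t; have h := continuous_comp (@P_cont R m Q t) (@cabs_cont R _); exact: h.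
have cpA : compact A := subclosed_compact cA (@segment_compact R 0 1) sA.
have gpos : forall t, A t -> 0 < g t by move=> t At; exact: (@cabs_gt0 R _ (nz t At)).
have [M1 HM1] := @bnd_on R A g cpA (@continuous_subspaceT _ _ A g gc).
have [M2 HM2] : exists M, forall t, A t -> `|(g t)^-1| <= M.
  apply: (@bnd_on R A (fun t => (g t)^-1) cpA); apply: continuous_in_subspaceT => t /[1!inE] At.
  by apply: cvgV; [rewrite gt_eqF ?gpos | exact: gc].
set c := Num.max 1 (Num.max M1 M2).
have hK : forall t, A t -> `|ln (g t)| <= ln c.
  move=> t At; apply: ln_bound (gpos t At) _ _.
    apply: le_trans (ler_norm _) (le_trans (HM1 t At) _).
    by rewrite /c !le_max lexx !orbT.
  apply: le_trans (ler_norm _) (le_trans (HM2 t At) _).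
  by rewrite /c !le_max lexx !orbT.
set K := ln c.
have K0 : 0 <= K by rewrite ln_ge0 // le_max lexx.
have mA : measurable A := measurable_realfun.closed_measurable cA.
have mF : forall k, measurable_fun A (fun t : R => (((ln (g t) ^+ k) : R)%:E : \bar R)).
  move=> k; apply/measurable_EFinP; apply: measurable_funX.
  apply: measurableT_comp; first exact: measurable_ln.
  apply: measurable_funTS; exact: continuous_measurable_fun.
have lamA : (lebesgue_measure A <= 1%:E)%E.
  have h := @le_measure _ _ _ (@lebesgue_measure R) A `[0, 1]%classic (mem_set mA) (mem_set (measurable_itv _)) sA.
  apply: (le_trans h).
  have h1 : (@lebesgue_measure R `[0%R, 1%R]%classic = 1%:E)%E.
    by rewrite lebesgue_measure_itv /= lte_fin ltr01 sube0.
  rewrite -h1; exact: lexx.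
have bound : forall k, (`|\int[@lebesgue_measure R]_(t in A) ((ln (g t))^+k)%:E|
    <= (K^+k)%:E)%E.
  move=> k; have hh := le_abse_integral (@lebesgue_measure R) mA (mF k). apply: (le_trans hh).
  apply: (@le_trans _ _ (\int[@lebesgue_measure R]_(t in A) (K^+k)%:E)%E).
    apply: (@ge0_le_integral _ _ R (@lebesgue_measure R) A mA).
    - by move=> t _; exact: abse_ge0.
    - exact: (measurableT_comp (@abse_measurable R setT) (mF k)).
    - exact: measurable_cst.
    - move=> t At; rewrite abse_EFin lee_fin normrX lerXn2r ?nnegrE //.
      exact: hK.
  rewrite integral_cst //.
  rewrite -{2}[(K^+k)%:E]mule1; apply: lee_wpmul2l => //.
  by rewrite lee_fin exprn_ge0.
have bnd2 : forall k, exists r,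
    (\int[@lebesgue_measure R]_(t in A) ((ln (g t))^+k)%:E = r%:E)%E /\ `|r| <= K^+k.
  move=> k; have := bound k.
  case: (\int[@lebesgue_measure R]_(t in A) ((ln (g t))^+k)%:E)%E => [r| |] /=.
  - by rewrite lee_fin => h; exists r.
  - by rewrite leye_eq.
  - by rewrite leye_eq.
set b := exp_coeff K.
have hb : b @ \oo --> 0 := cvg_exp_coeff K.
apply: (@squeeze_cvge _ _ _ R (fun k => (- b k)%:E) _ (fun k => (b k)%:E)).
- apply: nearW => k; have [r [Er hr]] := bnd2 k.
  rewrite Er -EFinM !lee_fin -ler_norml.
  rewrite /b /exp_coeff /= normrM ger0_norm ?invr_ge0 // mulrC.
  by apply: ler_wpM2r => //; rewrite invr_ge0.
- apply: cvg_EFin; first exact: nearW.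
  rewrite -oppr0; exact: (cvgN hb).
- apply: cvg_EFin; first exact: nearW.
  exact: hb.
Qed.
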